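(* Let $n\ge 1$, $L\ge 1$ and $0\le s<n$ be integers, and consider the $(n,L)$-regular tree $T$. Let $\mathcal{D}$ be a finite data set with $|\mathcal{D}|=d\ge 1$, and let $r\in[0,1]$. Suppose a data placement assigns to each worker node $v$ a set $\mathcal{D}(v)\subseteq\mathcal{D}$ with $|\mathcal{D}(v)|\le r d$ for every worker $v$, and suppose the placement is robust to any $s$ stragglers per parent (as defined in the context). Then $$ r \;\ge\; r_{\mathsf{CR}} \;:=\; \frac{1}{\left(\frac{n}{s+1}\right)+\left(\frac{n}{s+1}\right)^2+\cdots+\left(\frac{n}{s+1}\right)^L}. $$
   Context: An $(n,L)$-regular tree consists of a root node (the master, layer $0$) and $L$ layers of worker nodes: each node in layers $0,1,\dots,L-1$ has exactly $n$ children in the next layer, and the nodes of layer $L$ are leaves; thus there are $N=n+n^2+\cdots+n^L$ worker nodes. A straggling pattern is a choice, for every node $u$ in layers $0,\dots,L-1$, of a set of at most $s$ of the children of $u$, declared straggling. Under a straggling pattern, a worker node $v$ is called surviving if neither $v$ nor any of its ancestors in layers $1,\dots,L$ (i.e. the nodes on the path from $v$ to the master, excluding the master) is straggling. The placement $\{\mathcal{D}(v)\}$ is robust to any $s$ stragglers per parent if for every straggling pattern and every data point $x\in\mathcal{D}$ there is a surviving worker $v$ with $x\in\mathcal{D}(v)$ (this is the necessary condition for the master to recover the full gradient $\sum_{x\in\mathcal{D}}\nabla\ell(\theta;x)$, since the contribution of $x$ can only be computed at nodes storing $x$ and propagated to the master along the tree). The number $r$ bounding the fraction of the data set stored at each worker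 is the computation load. *)

(* Defs.v *)
From HB Require Import structures.
From mathcomp Require Import all_boot all_order all_algebra.
Set Implicit Arguments. Unset Strict Implicit. Unset Printing Implicit Defensive.
Import Order.TTheory GRing.Theory Num.Theory.

(* Nodes of the (n,L)-regular tree are encoded by their path from the master:
   a node in layer k is a sequence of length k of child indices in 'I_n.
   The master is [::]; worker nodes are the sequences of length 1..L. *)
Definition is_worker (n L : nat) (v : seq 'I_n) : bool := (1 <= size v <= L)%N.

(* A straggling pattern assigns to every node u (in layers 0..L-1) the set
   S u of its straggling children; it has at most s stragglers per parent. *)
Definition valid_pattern (n L s : nat) (S : seq 'I_n -> {set 'I_n}) : Prop :=
  forall u : seq 'I_n, (size u < L)%N -> (#|S u| <= s)%N.

(* v survives under S iff no node on the path from v to the master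
   (excluding the master) is straggling: for every ancestor-or-self
   rcons p c of v (p being its parent), c is not in S p. *)
Definition surviving (n : nat) (S : seq 'I_n -> {set 'I_n}) (v : seq 'I_n) : Prop :=
  forall (p : seq 'I_n) (c : 'I_n), prefix (rcons p c) v -> c \notin S p.

Definition robust (n L s : nat) (D : finType) (P : seq 'I_n -> {set D}) : Prop :=
  forall S : seq 'I_n -> {set 'I_n}, valid_pattern L s S ->
    forall x : D, exists v : seq 'I_n,
      [/\ is_worker L v, surviving S v & x \in P v].

(* Main.v *)
Require Import Defs.
From HB Require Import structures.
From mathcomp Require Import all_boot all_order all_algebra.
From mathcomp Require Import ring lra.
Import Order.TTheory GRing.Theory Num.Theory.
Local Open Scope ring_scope.

Fixpoint Hf (R : realFieldType) (n L s : nat) (D : finType)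
  (P : seq 'I_n -> {set D}) (x : D) (m : nat) (u : seq 'I_n) : R :=
  ((is_worker L u && (x \in P u))%:R) +
  (match m with
   | m'.+1 => (s.+1)%:R^-1 * \sum_(c : 'I_n) Hf R n L s D P x m' (rcons u c)
   | 0 => 0 end).

Lemma Hf_ge0 (R : realFieldType) n L s D P x m u :
  0 <= @Hf R n L s D P x m u.
Proof.
elim: m u => [|m IH] u /=; first by rewrite addr0.
apply: addr_ge0 => //; apply: mulr_ge0; first by rewrite invr_ge0.
by apply: sumr_ge0 => c _; apply: IH.
Qed.

Lemma Hf_worker (R : realFieldType) n L s (D : finType) (P : seq 'I_n -> {set D}) x m u :
  is_worker L u -> x \in P u -> 1 <= @Hf R n L s D P x m u.
Proof.
move=> hw hx; case: m => [|m] /=; rewrite hw hx /=; first by rewrite addr0.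
rewrite lerDl; apply: mulr_ge0; first by rewrite invr_ge0.
by apply: sumr_ge0 => c _; apply: Hf_ge0.
Qed.

Lemma Hf_step (R : realFieldType) n L s D P x m u :
  (s.+1)%:R^-1 * \sum_(c : 'I_n) @Hf R n L s D P x m (rcons u c)
   <= @Hf R n L s D P x m.+1 u.
Proof. by rewrite /= lerDr. Qed.

Definition geo {R : realFieldType} (a : R) (m : nat) : R :=
  \sum_(1 <= k < m.+1) a ^+ k.

Lemma geoS (R : realFieldType) (a : R) m : geo a m.+1 = a * (1 + @geo R a m).
Proof.
rewrite /geo big_nat_recl // expr1 mulrDr mulr1 mulr_sumr; congr (_ + _).
by apply: eq_bigr => i _; rewrite exprS.
Qed.

Lemma Hf_sum (R : realFieldType) n L s (D : finType) (P : seq 'I_n -> {set D}) (r : R) m u :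
  0 <= r ->
  (forall v : seq 'I_n, is_worker L v -> (#|P v|%:R <= r * #|D|%:R :> R)) ->
  (size u + m <= L)%N ->
  \sum_(x : D) @Hf R n L s D P x m u <=
  r * #|D|%:R * ((is_worker L u)%:R + geo (n%:R / (s.+1)%:R) m).
Proof.
move=> r0 hP; elim: m u => [|m IH] u hs /=.
  rewrite /geo big_geq // addr0.
  case hw: (is_worker L u) => /=; last first.
    by rewrite mulr0 big1 // => x _; rewrite addr0.
  rewrite mulr1 (le_trans _ (hP _ hw)) // -sum1_card natr_sum [in X in _ <= X]big_mkcond /=.
  by rewrite le_eqVlt; apply/orP; left; apply/eqP; apply: eq_bigr => x _; rewrite addr0; case: (x \in P u).
rewrite big_split /= mulrDr; apply: lerD.
  case hw: (is_worker L u) => /=; last by rewrite big1 ?mulr0.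
  rewrite mulr1 (le_trans _ (hP _ hw)) //.
  rewrite -sum1_card natr_sum [in X in _ <= X]big_mkcond /= le_eqVlt; apply/orP; left.
  by apply/eqP; apply: eq_bigr => x _; case: (x \in P u).
rewrite -mulr_sumr exchange_big /= geoS.
have hc : forall c : 'I_n, \sum_(x : D) @Hf R n L s D P x m (rcons u c) <=
     r * #|D|%:R * (1 + geo (n%:R / (s.+1)%:R) m).
  move=> c; have := IH (rcons u c); rewrite size_rcons.
  have hs' : (size u + 1 + m <= L)%N by rewrite -addnA add1n.
  rewrite addn1 in hs' => /(_ hs').
  suff -> : is_worker L (rcons u c) by [].
  by rewrite /is_worker size_rcons /=; apply: leq_trans hs'; rewrite leq_addr.
apply: le_trans (_ : (s.+1)%:R^-1 * \sum_(c : 'I_n) (r * #|D|%:R * (1 + geo (n%:R / (s.+1)%:R) m)) <= _).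
  by apply: ler_wpM2l; [rewrite invr_ge0 | apply: ler_sum => c _; apply: hc].
rewrite sumr_const card_ord -mulr_natr le_eqVlt; apply/orP; left; apply/eqP.
ring.
Qed.

Theorem theorem1 (R : realFieldType) (n L s : nat) (D : finType)
  (P : seq 'I_n -> {set D}) (r : R) :
  (1 <= n)%N -> (1 <= L)%N -> (s < n)%N -> (0 < #|D|)%N ->
  0 <= r -> r <= 1 ->
  (forall v : seq 'I_n, is_worker L v -> (#|P v|%:R <= r * #|D|%:R :> R)) ->
  robust L s P ->
  (\sum_(1 <= k < L.+1) ((n%:R / (s.+1)%:R : R) ^+ k))^-1 <= r.
Proof.
move=> n1 L1 sn d0 r0 r1 hP hrob.
have key : forall x, 1 <= @Hf R n L s D P x L [::].
  move=> x; case: (leP 1 (@Hf R n L s D P x L [::])) => // hlt; exfalso.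
  pose Hx u := @Hf R n L s D P x (L - size u) u.
  pose good u := [set c | 1 <= Hx (rcons u c)].
  pose S u := if (#|good u| <= s)%N then good u else set0.
  have vS : valid_pattern L s S.
    by move=> u _; rewrite /S; case: ifP => // _; rewrite cards0.
  have [v [hw hsv hxv]] := hrob S vS x.
  have gstep : forall p, (size p < L)%N -> Hx p < 1 -> (#|good p| <= s)%N.
    move=> p hp hlt'.
    have h1 := @Hf_step R n L s D P x (L - (size p).+1) p.
    rewrite (subnSK hp) in h1.
    have h2 : #|good p|%:R <= \sum_(c : 'I_n) @Hf R n L s D P x (L - (size p).+1) (rcons p c).
      rewrite -sum1_card natr_sum [in X in _ <= X](bigID (mem (good p))) /=.
      rewrite -[X in X <= _]addr0; apply: lerD.
        apply: ler_sum => c; rewrite inE => hc.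
        by move: hc; rewrite /Hx size_rcons.
      by apply: sumr_ge0 => c _; apply: Hf_ge0.
    have h3 : #|good p|%:R < (s.+1)%:R :> R.
      apply: le_lt_trans h2 _.
      have := le_lt_trans h1 hlt'.
      by rewrite mulrC ltr_pdivrMr ?ltr0n // mul1r.
    by move: h3; rewrite ltr_nat ltnS.
  have hpre : forall k, (k <= size v)%N -> Hx (take k v) < 1.
    elim => [|k IHk] hk; first by rewrite take0 /Hx subn0.
    rewrite (take_nth (Ordinal n1) hk).
    set p := take k v; set c := nth (Ordinal n1) v k.
    have hsp : size p = k by rewrite size_take hk.
    have hpL : (size p < L)%N.
      by rewrite hsp; apply: leq_trans hk _; case/andP: hw.
    have hg := gstep p hpL (IHk (ltnW hk)).
    have hc : c \notin S p by apply: hsv; rewrite -take_nth // prefix_take.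
    by move: hc; rewrite /S hg inE ltNge.
  have := hpre (size v) (leqnn _); rewrite take_size.
  by rewrite ltNge /Hx Hf_worker.
have hs := @Hf_sum R n L s D P r L [::] r0 hP (leqnn _).
have hw0 : is_worker L ([::] : seq 'I_n) = false by [].
rewrite hw0 add0r in hs.
set g := geo (n%:R / (s.+1)%:R) L in hs.
have hd : #|D|%:R <= r * #|D|%:R * g.
  apply: le_trans hs.
  have := @ler_sum R _ (index_enum D) predT (fun _ => 1) _ (fun x _ => key x).
  by rewrite sumr_const cardE /enum_mem size_filter count_predT.
have dpos : 0 < #|D|%:R :> R by rewrite ltr0n.
have hg : 0 < g.
  rewrite /g; clear hs hd key hrob hP hw0 g; case: L L1 => // L' _; rewrite geoS.
  apply: mulr_gt0; first by apply: divr_gt0; rewrite ltr0n.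
  apply: lt_le_trans (ltr01) _; rewrite lerDl.
  by apply: sumr_ge0 => k _; apply: exprn_ge0; apply: divr_ge0.
have h1 : 1 <= r * g.
  by rewrite -(ler_pM2l dpos) mulr1 mulrA (mulrC _ r).
change (g^-1 <= r).
by rewrite -[g^-1]mul1r ler_pdivrMr.
Qed.
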